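(* Let $G$ be a finite $p$-group and let $\alpha\in Z^2(G,\mathbb{C}^\times)$. Then $G$ has a faithful irreducible $\alpha$-representation if and only if, for every non-trivial central subgroup $N$ of $G$, the class $[\alpha]$ does not lie in the image of the inflation map $\operatorname{inf}:\mathrm{H}^2(G/N,\mathbb{C}^\times)\to\mathrm{H}^2(G,\mathbb{C}^\times)$.
   Context: All groups are finite and all representations are over $\mathbb{C}$. For a cocycle $\alpha\in Z^2(G,\mathbb{C}^\times)$, an $\alpha$-representation of $G$ is a map $\rho:G\to \mathrm{GL}(V)$ ($V$ finite-dimensional) with $\rho(1)=1_V$ and $\rho(g)\rho(h)=\alpha(g,h)\rho(gh)$ for all $g,h$; it is irreducible if $V$ has no proper nonzero $\rho(G)$-invariant subspace. Its (projective) kernel is $\ker\rho=\{g\in G:\rho(g)=\lambda I_V \text{ for some }\lambda\in\mathbb{C}^\times\}$, and $\rho$ is faithful if $\ker\rho=1$. For $N\trianglelefteq G$ the inflation map sends the class of $\beta\in Z^2(G/N,\mathbb{C}^\times)$ to the class of $(x,y)\mapsto\beta(xN,yN)$. *)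

(* Defs.v *)
From mathcomp Require Import all_boot all_algebra all_fingroup all_solvable.
From mathcomp Require Import Rstruct complex.
Set Implicit Arguments. Unset Strict Implicit. Unset Printing Implicit Defensive.
Import GRing.Theory Num.Theory.
Local Open Scope ring_scope.

Definition C : numClosedFieldType := complex Rdefinitions.R.

Definition is_cocycle {gT : finGroupType} (G : {set gT}) (alpha : gT -> gT -> C) : Prop :=
  [/\ forall x y, x \in G -> y \in G -> alpha x y != 0,
      alpha 1%g 1%g = 1 &
      forall x y z, x \in G -> y \in G -> z \in G ->
        alpha x y * alpha (x * y)%g z = alpha y z * alpha x (y * z)%g].

Section Defs.
Variable gT : finGroupType.

(* rho is an alpha-representation of G on V = C^n (column vectors, rho g
   acting by left multiplication): rho g invertible, rho 1 = 1,
   rho g rho h = alpha(g,h) rho (gh). *)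
Definition is_alpha_rep (G : {set gT}) (alpha : gT -> gT -> C) n
    (rho : gT -> 'M[C]_n) : Prop :=
  [/\ forall g, g \in G -> rho g \in unitmx,
      rho 1%g = 1%:M &
      forall g h, g \in G -> h \in G ->
        rho g *m rho h = alpha g h *: rho (g * h)%g].

(* A subspace W of column vectors is encoded by the row space of the
   matrix U whose rows span W (transposed); invariance of W under left
   multiplication by rho g reads (U *m (rho g)^T <= U)%MS. *)
Definition irreducible_rep (G : {set gT}) n (rho : gT -> 'M[C]_n) : Prop :=
  (0 < n)%N /\
  forall U : 'M[C]_n,
    (forall g, g \in G -> (U *m (rho g)^T <= U)%MS) ->
    U = 0 \/ (U == (1%:M : 'M[C]_n))%MS.

Definition proj_kernel (G : {set gT}) n (rho : gT -> 'M[C]_n) : gT -> Prop :=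
  fun g => g \in G /\ exists lam : C, lam != 0 /\ rho g = lam%:M.

Definition faithful_rep (G : {set gT}) n (rho : gT -> 'M[C]_n) : Prop :=
  forall g, proj_kernel G rho g -> g = 1%g.

(* [alpha] lies in the image of inf : H^2(G/N, C^x) -> H^2(G, C^x):
   there is a cocycle beta on G/N such that alpha is cohomologous to the
   inflated cocycle (x,y) |-> beta(xN, yN), i.e. they differ by the
   coboundary (x,y) |-> mu(x) mu(y) / mu(xy) of some mu : G -> C^x. *)
Definition in_inflation_image (G N : {group gT}) (alpha : gT -> gT -> C) : Prop :=
  exists (beta : coset_of N -> coset_of N -> C) (mu : gT -> C),
    [/\ is_cocycle (G / N)%g beta,
        forall x, x \in G -> mu x != 0 &
        forall x y, x \in G -> y \in G ->
          alpha x y = beta (coset N x) (coset N y) * (mu x * mu y / mu (x * y)%g)].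

End Defs.

(* Main.v *)
Require Import Defs.
From mathcomp Require Import all_boot all_algebra all_fingroup all_solvable.
From mathcomp Require Import Rstruct complex ring.
From Stdlib Require Import Classical.
Set Implicit Arguments. Unset Strict Implicit. Unset Printing Implicit Defensive.
Import GRing.Theory Num.Theory.
Local Open Scope ring_scope.

Lemma cocycle1l (gT : finGroupType) (G : {group gT}) (alpha : gT -> gT -> C) x :
  is_cocycle G alpha -> x \in G -> alpha 1%g x = 1.
Proof.
move=> [nz a11 co] xG.
have G1 : (1%g \in G) by exact: group1.
have := co 1%g 1%g x G1 G1 xG; rewrite !mul1g a11 mul1r => /eqP.
by rewrite -{1}[alpha 1%g x]mulr1 eq_sym (inj_eq (mulfI (nz _ _ G1 xG))) => /eqP.
Qed.

Lemma cocycle1r (gT : finGroupType) (G : {group gT}) (alpha : gT -> gT -> C) x :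
  is_cocycle G alpha -> x \in G -> alpha x 1%g = 1.
Proof.
move=> [nz a11 co] xG.
have G1 : (1%g \in G) by exact: group1.
have := co x 1%g 1%g xG G1 G1; rewrite !mulg1 a11 mul1r => /eqP.
by rewrite -[X in _ == X]mulr1 (inj_eq (mulfI (nz _ _ xG G1))) => /eqP.
Qed.

Lemma not_unit0 n : (0 < n)%N -> (0 : 'M[C]_n) \notin unitmx.
Proof.
case: n => // n _; rewrite unitmxE det0 unitr0 //.
Qed.

Lemma schur_central (gT : finGroupType) (G : {group gT}) (alpha : gT -> gT -> C)
   n (rho : gT -> 'M[C]_n) z :
  is_alpha_rep G alpha rho -> irreducible_rep G rho -> z \in G ->
  (forall g, g \in G -> rho z *m rho g = rho g *m rho z) ->
  proj_kernel G rho z.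
Proof.
move=> [unitr rho1 rhoM] [npos irr] zG comm.
have [a /eigenvalueP [v vE vnz]] := eigenvalue_closed (rho z)^T npos.
pose U := eigenspace (rho z)^T a.
have hU : forall g, g \in G -> (U *m (rho g)^T <= U)%MS.
  move=> g gG; rewrite /U /eigenspace sub_kermx; apply/eqP; rewrite -mulmxA.
  have -> : (rho g)^T *m ((rho z)^T - a%:M) = ((rho z)^T - a%:M) *m (rho g)^T.
    rewrite mulmxBl mulmxBr -!trmx_mul comm // scalar_mxC //.
  by rewrite mulmxA (sub_kermxP (submx_refl _)) mul0mx.
have Unz : U != 0.
  apply/negP => /eqP U0.
  have : (v <= U)%MS by rewrite /U /eigenspace sub_kermx mulmxBr vE mul_mx_scalar subrr.
  by rewrite U0 submx0 (negbTE vnz).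
case: (irr U hU) => [U0|U1]; first by rewrite U0 eqxx in Unz.
have : (1%:M <= U)%MS by case/andP: U1.
rewrite /U /eigenspace sub_kermx mul1mx subr_eq0 => /eqP E.
have rz : rho z = a%:M by rewrite -[rho z]trmxK E tr_scalar_mx.
split=> //; exists a; split=> //.
apply/negP => /eqP a0; have := unitr z zG; rewrite rz a0.
have -> : (0 : C)%:M = 0 :> 'M[C]_n by apply/matrixP=> i j; rewrite !mxE mul0rn.
by rewrite (negbTE (not_unit0 npos)).
Qed.

Lemma dir1 (gT : finGroupType) (G : {group gT}) (alpha : gT -> gT -> C)
   n (rho : gT -> 'M[C]_n) :
  is_cocycle G alpha ->
  [/\ is_alpha_rep G alpha rho, irreducible_rep G rho & faithful_rep G rho] ->
  forall N : {group gT}, (N \subset 'Z(G))%g -> N :!=: 1%g ->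
      ~ in_inflation_image G N alpha.
Proof.
move=> coc [rep irr faith] N sNZ ntN [beta [mu [bco munz E]]].
have [z zN z1] := trivgPn _ ntN.
have /centerP [zG zc] := subsetP sNZ z zN.
case: (rep) => _ _ rhoM.
have : proj_kernel G rho z.
  apply: (schur_central rep irr zG) => g gG.
  have zg : (z * g = g * z)%g by exact: zc.
  rewrite !rhoM // zg; congr (_ *: _).
  rewrite !E // coset_id // -zg.
  have sNG : (N \subset G)%g by apply: subset_trans sNZ (center_sub G).
  have gNG : coset N g \in (G / N)%g by apply: mem_quotient.
  rewrite (cocycle1l bco gNG) (cocycle1r bco gNG).
  by rewrite (mulrC (mu z)).
by move/faith => /eqP; rewrite (negbTE z1).
Qed.

Lemma rep_unit (gT : finGroupType) (G : {group gT}) (alpha : gT -> gT -> C)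
   n (rho : gT -> 'M[C]_n) g :
  is_cocycle G alpha -> rho 1%g = 1%:M ->
  (forall g h, g \in G -> h \in G -> rho g *m rho h = alpha g h *: rho (g * h)%g) ->
  g \in G -> rho g \in unitmx.
Proof.
move=> [nz _ _] r1 rM gG.
have giG : (g^-1 \in G)%g by rewrite groupV.
have nz' := nz _ _ gG giG.
have [] := @mulmx1_unit _ _ (rho g) ((alpha g g^-1%g)^-1 *: rho g^-1%g) => //.
  by rewrite -scalemxAr rM // mulgV r1 scalerA mulVf // scale1r.
Qed.

Definition regrep (gT : finGroupType) (G : {group gT}) (alpha : gT -> gT -> C)
  (g : gT) : 'M[C]_#|G| :=
  \matrix_(i, j) (if enum_val i == (g * enum_val j)%g then alpha g (enum_val j) else 0).

Lemma regrep_rep (gT : finGroupType) (G : {group gT}) (alpha : gT -> gT -> C) :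
  is_cocycle G alpha -> is_alpha_rep G alpha (regrep G alpha).
Proof.
move=> coc; have [nz a11 co] := coc.
have r1 : regrep G alpha 1%g = 1%:M.
  apply/matrixP=> i j; rewrite !mxE mul1g (inj_eq enum_val_inj).
  by case: eqP => // _; rewrite (cocycle1l coc (enum_valP j)).
have rM : forall g h, g \in G -> h \in G ->
    regrep G alpha g *m regrep G alpha h = alpha g h *: regrep G alpha (g * h)%g.
  move=> g h gG hG; apply/matrixP=> i k; rewrite !mxE.
  set xk := enum_val k; have xkG : xk \in G := enum_valP k.
  have hxG : (h * xk \in G)%g by rewrite groupM.
  pose j0 := enum_rank_in (group1 G) (h * xk)%g.
  have ej0 : enum_val j0 = (h * xk)%g by rewrite enum_rankK_in.
  rewrite (bigD1 j0) //= big1 ?addr0; last first.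
    move=> j jj0; rewrite !mxE; case: ifP => _; last by rewrite mul0r.
    case: ifP; last by rewrite mulr0.
    by move/eqP => ej; case/eqP: jj0; apply: enum_val_inj; rewrite ej ej0.
  rewrite !mxE ej0 eqxx -mulgA.
  case: ifP => _; last by rewrite mul0r mulr0.
  by rewrite co // mulrC.
split=> //; move=> g gG; exact: (rep_unit coc r1 rM gG).
Qed.

Lemma subrep (gT : finGroupType) (G : {group gT}) (alpha : gT -> gT -> C)
   n (rho : gT -> 'M[C]_n) (U : 'M[C]_n) :
  is_cocycle G alpha -> is_alpha_rep G alpha rho ->
  (forall g, g \in G -> (U *m (rho g)^T <= U)%MS) ->
  exists rho' : gT -> 'M[C]_(\rank U), is_alpha_rep G alpha rho'.
Proof.
move=> coc [_ r1 rM] hU.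
pose V := row_base U.
have fV : row_free V := row_base_free U.
have sV : forall g, g \in G -> stablemx V (rho g)^T.
  by move=> g gG; rewrite /V !(eqmxMr _ (eq_row_base U)) !eq_row_base hU.
pose rho' g := (conjmx V (rho g)^T)^T.
have r1' : rho' 1%g = 1%:M by rewrite /rho' r1 tr_scalar_mx conjmx_scalar // tr_scalar_mx.
have rM' : forall g h, g \in G -> h \in G ->
    rho' g *m rho' h = alpha g h *: rho' (g * h)%g.
  move=> g h gG hG; rewrite /rho' -trmx_mul -conjmxM ?inE ?sV //.
  rewrite -trmx_mul rM // linearZ /=.
  by rewrite /conjmx -scalemxAr -scalemxAl linearZ.
exists rho'; split=> // g gG; exact: (rep_unit coc r1' rM' gG).
Qed.


Lemma exists_irr (gT : finGroupType) (G : {group gT}) (alpha : gT -> gT -> C) :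
  is_cocycle G alpha ->
  exists n (rho : gT -> 'M[C]_n), is_alpha_rep G alpha rho /\ irreducible_rep G rho.
Proof.
move=> coc.
suff H : forall m n (rho : gT -> 'M[C]_n), (n <= m)%N -> (0 < n)%N ->
    is_alpha_rep G alpha rho ->
    exists n (rho : gT -> 'M[C]_n), is_alpha_rep G alpha rho /\ irreducible_rep G rho.
  exact: (H _ _ _ (leqnn _) (cardG_gt0 G) (regrep_rep coc)).
elim=> [|m IH] n rho le_nm npos rep.
  by move: npos; rewrite leqn0 in le_nm; rewrite (eqP le_nm).
case: (classic (irreducible_rep G rho)) => [irr|nirr]; first by exists n, rho.
have [U hU] : exists U : 'M[C]_n, ~ ((forall g, g \in G -> (U *m (rho g)^T <= U)%MS) ->
    U = 0 \/ (U == (1%:M : 'M[C]_n))%MS).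
  apply: not_all_ex_not => hall; apply: nirr; split=> //.
have [inv nU] := imply_to_and _ _ hU.
have [U0 U1] := not_or_and _ _ nU.
have [rho' rep'] := subrep coc rep inv.
apply: (IH _ rho') => //.
- have : (\rank U < n)%N.
    rewrite ltn_neqAle rank_leq_col andbT; apply/negP => /eqP rU.
    apply: U1; rewrite /eqmx submx1 /= sub1mx /row_full rU eqxx //.
  by move=> h; rewrite -ltnS; exact: leq_trans h le_nm.
- by rewrite lt0n mxrank_eq0; apply/eqP.
Qed.

Lemma scal_of n (M : 'M[C]_n) (c b : C) : c != 0 -> c *: M = b%:M -> is_scalar_mx M.
Proof.
move=> c0 E; apply/is_scalar_mxP; exists (c^-1 * b).
by rewrite -scale_scalar_mx -E scalerA mulVf // scale1r.
Qed.

Lemma inflate (gT : finGroupType) (G N : {group gT}) (alpha : gT -> gT -> C)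
   n (rho : gT -> 'M[C]_n) :
  is_cocycle G alpha -> is_alpha_rep G alpha rho -> (0 < n)%N ->
  (N \subset G)%g -> (G \subset 'N(N))%g ->
  (forall z, z \in N -> is_scalar_mx (rho z)) ->
  in_inflation_image G N alpha.
Proof.
move=> coc [unitr r1 rM] npos sNG nNG scN.
have [nz a11 co] := coc.
pose i0 := Ordinal npos.
pose lam x := rho x i0 i0.
have lamE : forall z, z \in N -> rho z = (lam z)%:M.
  move=> z /scN /is_scalar_mxP [a E]; by rewrite /lam E mxE eqxx mulr1n.
have nzmx : forall x, x \in G -> rho x != 0.
  move=> x xG; apply/eqP => r0; have := unitr x xG.
  by rewrite r0 (negbTE (not_unit0 npos)).
pose t x := repr (coset N x).
have tP : forall x, x \in G -> exists2 m, m \in N & t x = (m * x)%g.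
  move=> x xG; apply/rcosetP; rewrite -val_coset; last exact: subsetP nNG x xG.
  exact: mem_repr_coset.
have tG : forall x, x \in G -> t x \in G.
  by move=> x xG; have [m mN ->] := tP x xG; rewrite groupM // (subsetP sNG).
have nxN : forall x, x \in G -> (x * (t x)^-1 \in N)%g.
  by move=> x xG; have [m mN ->] := tP x xG; rewrite invMg mulgA mulgV mul1g groupV.
have ct : forall x, coset N (t x) = coset N x by move=> x; exact: coset_reprK.
have tt : forall x, t (t x) = t x by move=> x; rewrite /t ct.
pose mu x := lam (x * (t x)^-1)%g / alpha (x * (t x)^-1)%g (t x).
have munz : forall x, x \in G -> mu x != 0.
  move=> x xG; have nN := nxN x xG; have nG := subsetP sNG _ nN.
  rewrite /mu mulf_neq0 // ?invr_eq0 ?nz ?tG //.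
  apply/negP => /eqP l0; have := nzmx _ ((subsetP sNG) _ (nxN x xG)).
  rewrite (lamE _ (nxN x xG)) l0.
  have -> : (0 : C)%:M = 0 :> 'M[C]_n by apply/matrixP=> i j; rewrite !mxE mul0rn.
  by rewrite eqxx.
have rhoE : forall x, x \in G -> rho x = mu x *: rho (t x).
  move=> x xG; have nN := nxN x xG; have nG := subsetP sNG _ nN.
  have := rM _ _ nG (tG x xG); rewrite mulgKV lamE // mul_scalar_mx => E.
  by rewrite /mu mulrC -scalerA E scalerA mulVf ?nz ?tG // scale1r.
have NG : forall x, x \in G -> x \in 'N(N)%g by move=> x; apply: (subsetP nNG).
have tM : forall x y, x \in G -> y \in G -> t (x * y)%g = t (t x * t y)%g.
  move=> x y xG yG; rewrite /t !coset_morphM ?NG ?tG //.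
  by rewrite -/(t x) -/(t y) !ct.
pose a' x y := alpha x y * mu (x * y)%g / (mu x * mu y).
have I : forall x y, x \in G -> y \in G ->
    a' x y *: rho (t (x * y)%g) = rho (t x) *m rho (t y).
  move=> x y xG yG; have xyG : (x * y \in G)%g by rewrite groupM.
  have := rM x y xG yG; rewrite (rhoE x) // (rhoE y) // (rhoE _ xyG).
  rewrite -scalemxAl -scalemxAr !scalerA => E.
  have m0 : mu x * mu y != 0 by rewrite mulf_neq0 ?munz.
  apply: (scalerI m0); rewrite E scalerA; congr (_ *: _).
  rewrite /a'; field; rewrite ?munz //.
have J : forall x y, x \in G -> y \in G -> a' x y = a' (t x) (t y).
  move=> x y xG yG; have := I _ _ (tG x xG) (tG y yG).
  rewrite !tt -tM // -I // => /eqP.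
  rewrite -subr_eq0 -scalerBl scaler_eq0 (negbTE (nzmx _ _)) ?orbF ?subr_eq0.
    by move/eqP.
  by rewrite tG ?groupM.
have a'nz : forall x y, x \in G -> y \in G -> a' x y != 0.
  move=> x y xG yG; have xyG : (x * y \in G)%g by rewrite groupM.
  rewrite /a' mulf_neq0 ?invr_eq0 ?(mulf_neq0 (nz _ _ xG yG) (munz _ xyG)) //.
  exact: mulf_neq0 (munz _ xG) (munz _ yG).
have a'co : forall x y z, x \in G -> y \in G -> z \in G ->
    a' x y * a' (x * y)%g z = a' y z * a' x (y * z)%g.
  move=> x y z xG yG zG; rewrite /a' mulgA.
  have E := co x y z xG yG zG.
  have m1 := munz _ xG; have m2 := munz _ yG; have m3 := munz _ zG.
  have m12 : mu (x * y)%g != 0 by rewrite munz ?groupM.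
  have m23 : mu (y * z)%g != 0 by rewrite munz ?groupM.
  rewrite -(mulgA x y z).
  transitivity ((alpha x y * alpha (x * y)%g z) * (mu (x * (y * z))%g / (mu x * mu y * mu z))).
    by field; rewrite ?m1 ?m2 ?m3 ?m12 ?m23.
  by rewrite E; field; rewrite ?m1 ?m2 ?m3 ?m12 ?m23.
have mu1 : mu 1%g = 1.
  have t1 : t 1%g = 1%g by rewrite /t coset_id ?group1 // repr_coset1.
  by rewrite /mu t1 invg1 mulg1 /lam r1 mxE eqxx mulr1n a11 divr1.
have qP : forall a, a \in (G / N)%g -> exists2 x, x \in G & a = coset N x.
  by move=> a /morphimP [x _ xG ->]; exists x.
exists (fun a b => a' (repr a) (repr b)), mu; split.
- split.
  + move=> a b /qP [x xG ->] /qP [y yG ->]; exact: a'nz (tG x xG) (tG y yG).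
  + rewrite repr_coset1 /a' mulg1 mu1 a11; by rewrite !mul1r invr1.
  + move=> a b c /qP [x xG ->] /qP [y yG ->] /qP [z zG ->].
    rewrite -!coset_morphM ?NG ?groupM //.
    rewrite -/(t x) -/(t y) -/(t z) -/(t (x * y)%g) -/(t (y * z)%g).
    rewrite -!J ?groupM //; exact: a'co.
- exact: munz.
- move=> x y xG yG; rewrite -/(t x) -/(t y) -J //.
  have m1 := munz _ xG; have m2 := munz _ yG.
  have m12 : mu (x * y)%g != 0 by rewrite munz ?groupM.
  rewrite /a'; field; rewrite ?m1 ?m2 ?m12 //.
Qed.

Lemma dir2 (p : nat) (gT : finGroupType) (G : {group gT}) (alpha : gT -> gT -> C) :
  (p.-group G)%g -> is_cocycle G alpha ->
  (forall N : {group gT}, (N \subset 'Z(G))%g -> N :!=: 1%g ->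
      ~ in_inflation_image G N alpha) ->
  exists (n : nat) (rho : gT -> 'M[C]_n),
      [/\ is_alpha_rep G alpha rho, irreducible_rep G rho & faithful_rep G rho].
Proof.
move=> pG coc HN.
have [n [rho [rep irr]]] := exists_irr coc.
case: (classic (faithful_rep G rho)) => [f|nf]; first by exists n, rho.
exfalso.
have [g [kg g1]] : exists g, proj_kernel G rho g /\ g <> 1%g.
  apply: NNPP => hn; apply: nf => g kg; apply: NNPP => g1; apply: hn; by exists g.
have [nz a11 co] := coc.
have [unitr r1 rM] := rep.
have [npos _] := irr.
pose K := [set x in G | is_scalar_mx (rho x)].
have Kg : group_set K.
  apply/group_setP; split; first by rewrite inE group1 r1 scalar_mx_is_scalar.
  move=> x y; rewrite !inE => /andP [xG /is_scalar_mxP [a ea]] /andP [yG /is_scalar_mxP [b eb]].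
  rewrite groupM //=; apply: (@scal_of _ _ (alpha x y) (a * b)); first exact: nz.
  by rewrite -rM // ea eb scalar_mxM.
pose KK := Group Kg.
have KJ : forall x h, x \in K -> h \in G -> (x ^ h)%g \in K.
  move=> x h; rewrite !inE => /andP [xG /is_scalar_mxP [a ea]] hG.
  have hiG : (h^-1 \in G)%g by rewrite groupV.
  rewrite groupJ //=.
  apply: (@scal_of _ _ (alpha x h * alpha h^-1%g (x * h)%g) (a * alpha h^-1%g h)).
    by rewrite mulf_neq0 ?nz ?groupM.
  have E : rho h^-1%g *m (rho x *m rho h) = (a * alpha h^-1%g h)%:M.
    by rewrite ea mul_scalar_mx -scalemxAr rM // mulVg r1 scale_scalar_mx mulr1 scale_scalar_mx.
  by rewrite -E rM // -scalemxAr rM ?groupM // scalerA conjgE mulgA.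
have nK : (KK <| G)%g.
  rewrite /normal; apply/andP; split.
    by apply/subsetP => x; rewrite inE => /andP [].
  apply/subsetP => h hG; rewrite inE; apply/subsetP => y; rewrite mem_conjg => yK.
  by rewrite -(conjgKV h y); apply: KJ.
have ntK : (KK :!=: 1)%g.
  apply/trivgPn; exists g; last by apply/eqP.
  case: kg => gG [lam [_ E]]; by rewrite inE gG E scalar_mx_is_scalar.
have ntN := meet_center_nil (pgroup_nil pG) nK ntK.
pose N := (KK :&: 'Z(G))%G.
have sNZ : (N \subset 'Z(G))%g by exact: subsetIr.
apply: (HN N sNZ ntN).
apply: (inflate coc rep npos).
- exact: subset_trans sNZ (center_sub G).
- exact: normal_norm (sub_center_normal sNZ).
- by move=> z; rewrite inE => /andP [/=]; rewrite inE => /andP [].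
Qed.

Theorem theorem3p1 (p : nat) (gT : finGroupType) (G : {group gT})
    (alpha : gT -> gT -> C) :
  prime p -> (p.-group G)%g -> is_cocycle G alpha ->
  ((exists (n : nat) (rho : gT -> 'M[C]_n),
      [/\ is_alpha_rep G alpha rho, irreducible_rep G rho & faithful_rep G rho])
   <->
   (forall N : {group gT}, (N \subset 'Z(G))%g -> N :!=: 1%g ->
      ~ in_inflation_image G N alpha)).
Proof.
move=> _ pG coc; split.
- by move=> [n [rho H]]; exact: dir1 coc H.
- exact: dir2 pG coc.
Qed.
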